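(* Let $\tau_1(\mathbf X)$ be the lifetime of a coherent system whose component lifetimes $X_1,\dots,X_n$ are (possibly dependent) identically distributed as $X$, with domination function $h_1$, i.e. $\bar F_{\tau_1(\mathbf X)}(x)=h_1(\bar F_X(x))$; and let $\tau_2(\mathbf Y)$ be the lifetime of a coherent system whose component lifetimes $Y_1,\dots,Y_m$ are identically distributed as $Y$, with domination function $h_2$, i.e. $\bar F_{\tau_2(\mathbf Y)}(x)=h_2(\bar F_Y(x))$. For $p\in(0,1)$ set $R_i(p)=(1-p)h_i'(p)/(1-h_i(p))$, $i=1,2$. Suppose that (i) $R_1(p)$ and $R_1(p)/R_2(p)$ are increasing in $p\in(0,1)$; (ii) $pR_1'(p)/R_1(p)$ or $pR_2'(p)/R_2(p)$ is decreasing in $p\in(0,1)$; (iii) $X\underset{b}{\prec}Y$ and $X\le_{hr}Y$. Then $\tau_1(\mathbf X)\underset{b}{\prec}\tau_2(\mathbf Y)$.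
   Context: All random variables are non-negative and absolutely continuous with support $[0,\infty)$. For a random variable $W$: density $f_W$, cdf $F_W$, survival $\bar F_W=1-F_W$, hazard rate $r_W=f_W/\bar F_W$, reversed hazard rate $\tilde r_W=f_W/F_W$. $X\le_{hr}Y$ means $\bar F_Y(x)/\bar F_X(x)$ is increasing in $x$. $X\underset{b}{\prec}Y$ ($X$ ages faster than $Y$ in reversed failure rate) means $\tilde r_X(x)/\tilde r_Y(x)$ is decreasing in $x\ge0$. For a coherent system with identically distributed (possibly dependent) components with common distribution that of $X$, the system reliability is $h(\bar F_X(x))$ for a domination function $h:[0,1]\to[0,1]$ (depending on structure and survival copula), increasing, continuous, $h(0)=0$, $h(1)=1$, assumed differentiable as needed. ''Increasing'' means non-decreasing, ''decreasing'' means non-increasing. *)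

(* Defs.v *)
From Stdlib Require Import Reals.
From Coquelicot Require Import Coquelicot.
Open Scope R_scope.

(* Cumulative distribution function F of a non-negative, absolutely continuous
   random variable with support [0,oo): F = 0 on (-oo,0], non-decreasing,
   continuous, F -> 1 at +oo, 0 < F < 1 on (0,oo), and F has a density
   f = F' at every x > 0 (so hazard / reversed hazard rates are pointwise
   defined). *)
Definition lifetime_cdf (F : R -> R) : Prop :=
  (forall x, x <= 0 -> F x = 0) /\
  (forall x y, x <= y -> F x <= F y) /\
  (forall x, continuous F x) /\
  is_lim F p_infty 1 /\
  (forall x, 0 < x -> 0 < F x < 1) /\
  (forall x, 0 < x -> ex_derive F x).

Definition surv (F : R -> R) (x : R) : R := 1 - F x.
Definition dens (F : R -> R) (x : R) : R := Derive F x.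
Definition rhr (F : R -> R) (x : R) : R := dens F x / F x.

Definition hr_le (FX FY : R -> R) : Prop :=
  forall x y, x <= y -> surv FY x / surv FX x <= surv FY y / surv FX y.

(* X ages faster than Y in reversed failure rate:
   rhr_X / rhr_Y decreasing on x >= 0 (x > 0, where the rates are defined) *)
Definition ages_faster_rfr (FX FY : R -> R) : Prop :=
  forall x y, 0 < x -> x <= y -> rhr FX y / rhr FY y <= rhr FX x / rhr FY x.

Definition domination_fun (h : R -> R) : Prop :=
  (forall p, 0 <= p <= 1 -> 0 <= h p <= 1) /\
  (forall p q, 0 <= p -> p <= q -> q <= 1 -> h p <= h q) /\
  (forall p, 0 <= p <= 1 -> continuity_pt h p) /\
  h 0 = 0 /\ h 1 = 1 /\
  (forall p, 0 < p < 1 -> ex_derive h p).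

Definition Rfun (h : R -> R) (p : R) : R := (1 - p) * Derive h p / (1 - h p).

Definition incr01 (g : R -> R) : Prop :=
  forall p q, 0 < p -> p <= q -> q < 1 -> g p <= g q.
Definition decr01 (g : R -> R) : Prop :=
  forall p q, 0 < p -> p <= q -> q < 1 -> g q <= g p.

(* Main.v *)
Require Import Defs.
From Stdlib Require Import Reals Lra.
From Coquelicot Require Import Coquelicot.
Open Scope R_scope.

Ltac fixeta := repeat match goal with
  |- context [Derive (fun y => ?f y)] => change (Derive (fun y => f y)) with (Derive f) end.

Lemma der_nonneg (f : R -> R) a b x l : a < x < b ->
  (forall p q, a < p -> p <= q -> q < b -> f p <= f q) ->
  is_derive f x l -> 0 <= l.
Proof.
  intros Hx Hm Hd. apply is_derive_Reals in Hd.
  destruct (Rle_or_lt 0 l) as [|Hl]; auto.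
  destruct (Hd (-l/2)) as [d Hd']; [lra|].
  set (h := Rmin (d/2) ((b-x)/2)).
  assert (dpos := cond_pos d).
  assert (h1 : h <= d/2) by apply Rmin_l.
  assert (h2 : h <= (b-x)/2) by apply Rmin_r.
  assert (hpos : 0 < h) by (unfold h; apply Rmin_pos; lra).
  assert (Hq : 0 <= (f (x+h) - f x)/h).
  { apply Rdiv_le_0_compat; [|lra]. assert (f x <= f (x+h)) by (apply Hm; lra). lra. }
  assert (Habs : Rabs h < d) by (rewrite Rabs_right; lra).
  specialize (Hd' h (Rgt_not_eq _ _ hpos) Habs).
  apply Rabs_def2 in Hd'. lra.
Qed.

Lemma decr_of_deriv (A dA : R -> R) :
  (forall x, 0 < x -> is_derive A x (dA x)) ->
  (forall x, 0 < x -> dA x <= 0) ->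
  forall x y, 0 < x -> x <= y -> A y <= A x.
Proof.
  intros Hd Hn x y hx hxy.
  destruct (Rle_lt_or_eq_dec _ _ hxy) as [hlt|heq]; [|subst; lra].
  destruct (MVT_gen A x y dA) as [c [Hc He]].
  - intros t Ht. rewrite Rmin_left in Ht by lra. apply Hd. lra.
  - intros t Ht. rewrite Rmin_left in Ht by lra.
    apply continuity_pt_filterlim. apply (ex_derive_continuous (V:=R_NormedModule) A t).
    eexists. apply Hd. lra.
  - rewrite Rmin_left in Hc by lra.
    assert (dA c <= 0) by (apply Hn; lra).
    assert (dA c * (y - x) <= 0) by nra. lra.
Qed.

Lemma div_nonneg a b : 0 <= a -> 0 <= b -> 0 <= a / b.
Proof.
  intros. destruct (Req_dec b 0) as [->|].
  - unfold Rdiv. rewrite Rinv_0. lra.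
  - apply Rdiv_le_0_compat; lra.
Qed.

Theorem theorem3p2
  (FX FY : R -> R) (h1 h2 : R -> R) (Ftau1 Ftau2 : R -> R)
  (HX : lifetime_cdf FX) (HY : lifetime_cdf FY)
  (Hh1 : domination_fun h1) (Hh2 : domination_fun h2)
  (Htau1 : forall x, surv Ftau1 x = h1 (surv FX x))
  (Htau2 : forall x, surv Ftau2 x = h2 (surv FY x))
  (HR1d : forall p, 0 < p < 1 -> ex_derive (Rfun h1) p)
  (HR2d : forall p, 0 < p < 1 -> ex_derive (Rfun h2) p)
  (HR1p : forall p, 0 < p < 1 -> 0 < Rfun h1 p)
  (HR2p : forall p, 0 < p < 1 -> 0 < Rfun h2 p)
  (Hi1 : incr01 (Rfun h1))
  (Hi2 : incr01 (fun p => Rfun h1 p / Rfun h2 p))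
  (Hii : decr01 (fun p => p * Derive (Rfun h1) p / Rfun h1 p) \/
         decr01 (fun p => p * Derive (Rfun h2) p / Rfun h2 p))
  (Hiii1 : ages_faster_rfr FX FY)
  (Hiii2 : hr_le FX FY) :
  ages_faster_rfr Ftau1 Ftau2.
Proof.
  destruct HX as [HX0 [HXm [HXc [HXl [HX01 HXd]]]]].
  destruct HY as [HY0 [HYm [HYc [HYl [HY01 HYd]]]]].
  destruct Hh1 as [_ [_ [_ [_ [_ Hh1d]]]]].
  destruct Hh2 as [_ [_ [_ [_ [_ Hh2d]]]]].
  set (G1 := fun p => p * Derive (Rfun h1) p / Rfun h1 p).
  set (G2 := fun p => p * Derive (Rfun h2) p / Rfun h2 p).
  assert (HR1' : forall p, 0 < p < 1 -> 0 <= Derive (Rfun h1) p).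
  { intros p hp. apply (der_nonneg (Rfun h1) 0 1 p); auto.
    apply Derive_correct; auto. }
  (* (R1/R2)' >= 0 *)
  assert (HQ : forall p, 0 < p < 1 ->
     Rfun h1 p * Derive (Rfun h2) p <= Derive (Rfun h1) p * Rfun h2 p).
  { intros p hp.
    assert (H2 := HR2p p hp).
    assert (D := is_derive_div _ _ p _ _ (Derive_correct _ _ (HR1d p hp))
                   (Derive_correct _ _ (HR2d p hp)) (Rgt_not_eq _ _ H2)).
    apply (der_nonneg _ 0 1 p) in D; auto.
    assert (0 < Rfun h2 p ^ 2) by (apply pow_lt; lra).
    apply Rmult_le_compat_r with (r := Rfun h2 p ^ 2) in D; [|lra].
    unfold Rdiv in D. rewrite Rmult_0_l, Rmult_assoc, Rinv_l, Rmult_1_r in D by lra.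
    lra. }
  assert (HG12 : forall p, 0 < p < 1 -> G2 p <= G1 p).
  { intros p hp. assert (H1 := HR1p p hp). assert (H2 := HR2p p hp).
    assert (E : G1 p - G2 p = p * (Derive (Rfun h1) p * Rfun h2 p - Rfun h1 p * Derive (Rfun h2) p) / (Rfun h1 p * Rfun h2 p))
      by (unfold G1, G2; field; lra).
    assert (0 <= G1 p - G2 p); [|lra].
    rewrite E. apply Rdiv_le_0_compat; [|nra].
    apply Rmult_le_pos; [lra|]. specialize (HQ p hp). lra. }
  assert (HG1 : forall p, 0 < p < 1 -> 0 <= G1 p).
  { intros p hp. unfold G1. apply Rdiv_le_0_compat; [|apply HR1p; auto].
    apply Rmult_le_pos; [lra|]. apply HR1'; auto. }
  assert (HGuv : forall u v, 0 < u -> u <= v -> v < 1 -> G2 v <= G1 u).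
  { intros u v hu huv hv. destruct Hii as [D|D].
    - assert (G1 v <= G1 u) by (apply D; auto).
      assert (G2 v <= G1 v) by (apply HG12; lra). lra.
    - assert (G2 v <= G2 u) by (apply D; auto).
      assert (G2 u <= G1 u) by (apply HG12; lra). lra. }
  assert (HfX : forall x, 0 < x -> 0 <= Derive FX x).
  { intros x hx. apply (der_nonneg FX (x-1) (x+1) x); [lra| |].
    intros; apply HXm; auto. apply Derive_correct; auto. }
  assert (HfY : forall x, 0 < x -> 0 <= Derive FY x).
  { intros x hx. apply (der_nonneg FY (x-1) (x+1) x); [lra| |].
    intros; apply HYm; auto. apply Derive_correct; auto. }
  assert (Huv : forall x, 0 < x -> 1 - FX x <= 1 - FY x).
  { intros x hx. assert (H := Hiii2 0 x (Rlt_le _ _ hx)).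
    unfold surv in H. rewrite HX0, HY0 in H by lra.
    specialize (HX01 x hx).
    replace ((1-0)/(1-0)) with 1 in H by field.
    apply Rmult_le_compat_r with (r := 1 - FX x) in H; [|lra].
    unfold Rdiv in H. rewrite Rmult_assoc, Rinv_l, Rmult_1_r in H by lra. lra. }
  assert (Hhaz : forall x, 0 < x ->
     Derive FY x * (1 - FX x) <= Derive FX x * (1 - FY x)).
  { intros x hx.
    assert (Hu := HX01 x hx).
    assert (D : is_derive (fun t => (1 - FY t) / (1 - FX t)) x
        ((- Derive FY x * (1 - FX x) - (1 - FY x) * (- Derive FX x)) / (1 - FX x) ^ 2)).
    { apply (is_derive_div (fun t => 1 - FY t) (fun t => 1 - FX t)).
      - auto_derive; [apply HYd; auto| fixeta; ring].
      - auto_derive; [apply HXd; auto| fixeta; ring].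
      - lra. }
    apply (der_nonneg _ (x-1) (x+1) x) in D; [|lra|].
    2: { intros p q _ hpq _. apply Hiii2. auto. }
    assert (0 < (1 - FX x) ^ 2) by (apply pow_lt; lra).
    apply Rmult_le_compat_r with (r := (1 - FX x) ^ 2) in D; [|lra].
    unfold Rdiv in D. rewrite Rmult_0_l, Rmult_assoc, Rinv_l, Rmult_1_r in D by lra.
    lra. }
  set (A := fun t => Rfun h1 (1 - FX t) / Rfun h2 (1 - FY t)).
  set (dA := fun t =>
     ((Derive (Rfun h1) (1 - FX t) * (- Derive FX t)) * Rfun h2 (1 - FY t)
      - Rfun h1 (1 - FX t) * (Derive (Rfun h2) (1 - FY t) * (- Derive FY t)))
      / Rfun h2 (1 - FY t) ^ 2).
  assert (HAd : forall x, 0 < x -> is_derive A x (dA x)).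
  { intros x hx. assert (Hu := HX01 x hx). assert (Hv := HY01 x hx).
    apply (is_derive_div (fun t => Rfun h1 (1 - FX t)) (fun t => Rfun h2 (1 - FY t))).
    - auto_derive; [repeat split; first [apply HXd; lra | apply HR1d; lra]| fixeta; unfold Rminus; ring].
    - auto_derive; [repeat split; first [apply HYd; lra | apply HR2d; lra]| fixeta; unfold Rminus; ring].
    - apply Rgt_not_eq. apply HR2p. lra. }
  assert (HAn : forall x, 0 < x -> dA x <= 0).
  { intros x hx. assert (Hu := HX01 x hx). assert (Hv := HY01 x hx).
    set (u := 1 - FX x). set (v := 1 - FY x).
    assert (hu : 0 < u < 1) by (unfold u; lra).
    assert (hv : 0 < v < 1) by (unfold v; lra).
    assert (a := HR1p u hu). assert (b := HR2p v hv).
    assert (Hg := HGuv u v (proj1 hu) (Huv x hx) (proj2 hv)).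
    assert (Hg1 := HG1 u hu).
    assert (fx := HfX x hx). assert (fy := HfY x hx).
    assert (hz := Hhaz x hx). fold u v in hz.
    unfold dA. fold u v.
    unfold G1, G2 in *.
    set (a' := Derive (Rfun h1) u) in *.
    set (b' := Derive (Rfun h2) v) in *.
    set (g1 := u * a' / Rfun h1 u) in *.
    set (g2 := v * b' / Rfun h2 v) in *.
    assert (Ea : a' = g1 * Rfun h1 u / u) by (unfold g1; field; lra).
    assert (Eb : b' = g2 * Rfun h2 v / v) by (unfold g2; field; lra).
    rewrite Ea, Eb.
    set (fX := Derive FX x) in *. set (fY := Derive FY x) in *.
    set (a0 := Rfun h1 u) in *. set (b0 := Rfun h2 v) in *.
    assert (K : g2 * fY * u <= g1 * fX * v).
    { assert (g2 * (fY * u) <= g1 * (fY * u)) by (apply Rmult_le_compat_r; nra).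
      assert (g1 * (fY * u) <= g1 * (fX * v)) by (apply Rmult_le_compat_l; lra).
      nra. }
    assert (P : 0 <= (a0 * b0 / (u * v)) * (g1 * fX * v - g2 * fY * u) / b0 ^ 2).
    { apply Rdiv_le_0_compat; [|apply pow_lt; lra].
      apply Rmult_le_pos; [|lra]. apply Rdiv_le_0_compat; nra. }
    match goal with |- ?e <= 0 =>
      replace e with (- ((a0 * b0 / (u * v)) * (g1 * fX * v - g2 * fY * u) / b0 ^ 2)) end.
    + lra.
    + field. lra. }
  assert (HAdec := decr_of_deriv A dA HAd HAn).
  assert (HApos : forall x, 0 < x -> 0 < A x).
  { intros x hx. assert (Hu := HX01 x hx). assert (Hv := HY01 x hx).
    unfold A. apply Rdiv_lt_0_compat; [apply HR1p | apply HR2p]; lra. }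
  assert (Hr1 : forall x, 0 < x -> rhr Ftau1 x = Rfun h1 (1 - FX x) * rhr FX x).
  { intros x hx. assert (Hu := HX01 x hx).
    assert (a := HR1p (1 - FX x) ltac:(lra)).
    assert (Hn : 1 - h1 (1 - FX x) <> 0).
    { intro E. unfold Rfun in a. rewrite E in a. unfold Rdiv in a.
      rewrite Rinv_0, Rmult_0_r in a. lra. }
    assert (EF : forall t, Ftau1 t = 1 - h1 (1 - FX t))
      by (intro t; specialize (Htau1 t); unfold surv in Htau1; lra).
    assert (D : Derive Ftau1 x = Derive h1 (1 - FX x) * Derive FX x).
    { rewrite (Derive_ext _ _ x EF). apply is_derive_unique.
      auto_derive; [repeat split; first [apply HXd; lra | apply Hh1d; lra]| fixeta; unfold Rminus; ring]. }
    unfold rhr, dens. rewrite D, (EF x). unfold Rfun. field. split; lra. }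
  assert (Hr2 : forall x, 0 < x -> rhr Ftau2 x = Rfun h2 (1 - FY x) * rhr FY x).
  { intros x hx. assert (Hu := HY01 x hx).
    assert (a := HR2p (1 - FY x) ltac:(lra)).
    assert (Hn : 1 - h2 (1 - FY x) <> 0).
    { intro E. unfold Rfun in a. rewrite E in a. unfold Rdiv in a.
      rewrite Rinv_0, Rmult_0_r in a. lra. }
    assert (EF : forall t, Ftau2 t = 1 - h2 (1 - FY t))
      by (intro t; specialize (Htau2 t); unfold surv in Htau2; lra).
    assert (D : Derive Ftau2 x = Derive h2 (1 - FY x) * Derive FY x).
    { rewrite (Derive_ext _ _ x EF). apply is_derive_unique.
      auto_derive; [repeat split; first [apply HYd; lra | apply Hh2d; lra]| fixeta; unfold Rminus; ring]. }
    unfold rhr, dens. rewrite D, (EF x). unfold Rfun. field. split; lra. }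
  assert (PR : forall a b c d, (a * b) / (c * d) = (a / c) * (b / d)).
  { intros. unfold Rdiv. rewrite Rinv_mult. ring. }
  intros x y hx hxy.
  rewrite (Hr1 x), (Hr1 y), (Hr2 x), (Hr2 y), !PR by lra.
  change (Rfun h1 (1 - FX x) / Rfun h2 (1 - FY x)) with (A x).
  change (Rfun h1 (1 - FX y) / Rfun h2 (1 - FY y)) with (A y).
  assert (B0 : 0 <= rhr FX y / rhr FY y).
  { assert (Hu := HX01 y ltac:(lra)). assert (Hv := HY01 y ltac:(lra)).
    unfold rhr, dens. apply div_nonneg; apply div_nonneg; try lra.
    apply HfX; lra. apply HfY; lra. }
  assert (Bd := Hiii1 x y hx hxy).
  assert (Ad := HAdec x y hx hxy).
  assert (Ap := HApos x hx).
  assert (A y * (rhr FX y / rhr FY y) <= A x * (rhr FX y / rhr FY y))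
    by (apply Rmult_le_compat_r; lra).
  assert (A x * (rhr FX y / rhr FY y) <= A x * (rhr FX x / rhr FY x))
    by (apply Rmult_le_compat_l; lra).
  lra.
Qed.
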